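(* Let $\rho>0$ and suppose that, for each value of $c^S>0$, the variable-window IPT thresholds satisfy $c_n^D=0$ for all $n\leq(1+\rho)\frac{c^S}{\underline{q}}$ (the values $c_n^D\geq0$ for larger $n$ being arbitrary). Then for every $f_1\in\mathcal{P}_1$, $$\limsup_{c^S\to\infty}\frac{E_{f_1,1}t_I}{c^S}\leq\frac{1}{q(f_1)}.$$
   Context: Setup. Let $\mathcal{A}=\{a_1,\dots,a_m\}$ be a finite alphabet and $\mathcal{P}$ the set of probability mass functions (p.m.f.s) on $\mathcal{A}$. $I(f\|f')=\sum_{a}f(a)\log\frac{f(a)}{f'(a)}$ is the Kullback–Leibler divergence. A known pre-change p.m.f. $f_0\in\mathcal{P}$ is fixed. $q:\mathcal{P}\to\mathbb{R}$ is quasiconcave and $L$-Lipschitz with respect to $\ell_1$, with $q_0:=q(f_0)<0<\underline{q}$, and the set of possible post-change p.m.f.s $\mathcal{P}_1$ is a nonempty subset of $\{f: q(f)\geq\underline{q}\}$. Under $P_{f_1,1}$ (expectation $E_{f_1,1}$) the observations $X_1,X_2,\dots$ are i.i.d. $f_1$. For $i\leq j$, $\hat f_{X_i^j}$ is the empirical p.m.f. of $X_i,\dots,X_j$. Variable-window IPT. Parameters: $c^S>0$ and a sequence $(c_n^D)_{n\geq1}$ of nonnegative thresholds. For $n\geq1$ let $f_n^*=\arg\min_{f\in\mathcal{P}:\,q(f)\geq c^S/n}I(f\|f_0)$. Put $Q(i,j)=(j-i+1)q(\hat f_{X_i^j})$ for $i\leq j$ and $Q(j+1,j)=0$. Set $\tau_1=1$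 and for $k\geq1$: $S_k=\max_{\tau_k\leq i\leq k+1}Q(i,k)$, with $i_k$ a maximizing index and $n_k=k-i_k+1$; $D_k=I(\hat f_{X_{i_k}^k}\|f_{n_k}^* )$; $\tau_{k+1}=k+1$ if $S_k\geq c^S$ and $D_k<c^D_{n_k}$ (restart), and $\tau_{k+1}=\tau_k$ otherwise. The IPT stopping time is $t_I=\inf\{k: S_k\geq c^S\text{ and }D_k\geq c^D_{n_k}\}$. *)

(* Defs.v *)
(* real numbers from Stdlib Reals.
   Alphabet A = {0,...,m-1} (symbol a_{i+1} is coded by the nat i).
   A p.m.f. on A is a function f : nat -> R (only values at a < m matter). *)
From Stdlib Require Import Reals Lra Lia List Arith.
Open Scope R_scope.

Fixpoint rsum (m : nat) (F : nat -> R) : R :=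
  match m with
  | O => 0
  | S k => rsum k F + F k
  end.

Definition is_pmf (m : nat) (f : nat -> R) : Prop :=
  (forall a, (a < m)%nat -> 0 <= f a) /\ rsum m f = 1.

Definition l1 (m : nat) (f g : nat -> R) : R := rsum m (fun a => Rabs (f a - g a)).

Definition quasiconcave (m : nat) (q : (nat -> R) -> R) : Prop :=
  forall f g lam, is_pmf m f -> is_pmf m g -> 0 <= lam <= 1 ->
    Rmin (q f) (q g) <= q (fun a => lam * f a + (1 - lam) * g a).

Definition lipschitz_l1 (m : nat) (q : (nat -> R) -> R) (L : R) : Prop :=
  forall f g, is_pmf m f -> is_pmf m g -> Rabs (q f - q g) <= L * l1 m f g.

(* Extended-real valued Kullback-Leibler divergence: None stands for +infinity.
   Conventions: 0 log(0/x) = 0 ; g a > 0 = h a gives +infinity. *)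
Fixpoint kl_aux (m : nat) (g h : nat -> R) : option R :=
  match m with
  | O => Some 0
  | S k =>
      match kl_aux k g h with
      | None => None
      | Some s =>
          if Rlt_dec 0 (g k) then
            (if Rlt_dec 0 (h k) then Some (s + g k * ln (g k / h k)) else None)
          else Some s
      end
  end.

Definition KL (m : nat) (g h : nat -> R) : option R := kl_aux m g h.

Definition ext_le (x y : option R) : Prop :=
  match y with
  | None => True
  | Some b => match x with Some a => a <= b | None => False end
  end.

Definition ext_geb (x : option R) (c : R) : bool :=
  match x with
  | None => true
  | Some v => if Rle_dec c v then true else false
  end.

Definition is_argmin (m : nat) (q : (nat -> R) -> R) (f0 : nat -> R) (c : R)
  (fs : nat -> R) : Prop :=
  (exists f, is_pmf m f /\ c <= q f) ->
  is_pmf m fs /\ c <= q fs /\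
  (forall f, is_pmf m f -> c <= q f -> ext_le (KL m fs f0) (KL m f f0)).

Definition emp (w : list nat) : nat -> R :=
  fun a => INR (count_occ Nat.eq_dec w a) / INR (length w).

(* window X_i,...,X_k of the observations xs = [X_1; ...; X_k] (1-based) *)
Definition window (i k : nat) (xs : list nat) : list nat :=
  firstn (k + 1 - i) (skipn (i - 1) xs).

Definition Qstat (q : (nat -> R) -> R) (i k : nat) (xs : list nat) : R :=
  if Nat.leb i k then INR (k + 1 - i) * q (emp (window i k xs)) else 0.

Definition is_max_selector (q : (nat -> R) -> R) (sel : nat -> list nat -> nat) : Prop :=
  forall tau xs, (1 <= tau <= length xs + 1)%nat ->
    (tau <= sel tau xs <= length xs + 1)%nat /\
    (forall i, (tau <= i <= length xs + 1)%nat ->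
       Qstat q i (length xs) xs <= Qstat q (sel tau xs) (length xs) xs).

(* Variable-window IPT.  ipt_state ... k xs = (stopped, tau_{k+1}) where
   stopped = true iff t_I <= k; only the first k entries of xs are read. *)
Fixpoint ipt_state (m : nat) (q : (nat -> R) -> R) (cS : R)
  (cD : nat -> R) (fstar : nat -> nat -> R) (sel : nat -> list nat -> nat)
  (k : nat) (xs : list nat) : bool * nat :=
  match k with
  | O => (false, 1%nat)
  | S k' =>
      let (stopped, tau) := ipt_state m q cS cD fstar sel k' xs in
      if stopped then (true, tau)
      else
        let pre := firstn k xs in
        let ik := sel tau pre in
        let nk := (k + 1 - ik)%nat in
        let Sk := Qstat q ik k pre in
        let Dge := ext_geb (KL m (emp (window ik k pre)) (fstar nk)) (cD nk) in
        if Rle_dec cS Sk then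
          (if Dge then (true, tau) else (false, (k + 1)%nat))
        else (false, tau)
  end.

Fixpoint all_seqs (m k : nat) : list (list nat) :=
  match k with
  | O => nil :: nil
  | S k' => flat_map (fun xs => map (fun a => xs ++ a :: nil) (seq 0 m)) (all_seqs m k')
  end.

Definition prod_prob (f : nat -> R) (xs : list nat) : R :=
  fold_right (fun a r => f a * r) 1 xs.

Definition prob_not_stopped (m : nat) (q : (nat -> R) -> R) (cS : R)
  (cD : nat -> R) (fstar : nat -> nat -> R) (sel : nat -> list nat -> nat)
  (f1 : nat -> R) (k : nat) : R :=
  fold_right Rplus 0
    (map (fun xs => if fst (ipt_state m q cS cD fstar sel k xs) then 0
                    else prod_prob f1 xs) (all_seqs m k)).

(* partial sum sum_{k=0}^{N} P(t_I > k);  E t_I = sup_N of these *)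
Definition ET_partial (m : nat) (q : (nat -> R) -> R) (cS : R)
  (cD : nat -> R) (fstar : nat -> nat -> R) (sel : nat -> list nat -> nat)
  (f1 : nat -> R) (N : nat) : R :=
  rsum (S N) (prob_not_stopped m q cS cD fstar sel f1).

(* Main.v *)
Require Import Defs.
From Stdlib Require Import Reals Lra Lia List Arith ZArith.
Open Scope R_scope.


Lemma rsum_ext m F G : (forall a, (a < m)%nat -> F a = G a) -> rsum m F = rsum m G.
Proof. induction m; simpl; intros H; auto. rewrite IHm, H; auto; intros; apply H; lia. Qed.

Lemma rsum_le m F G : (forall a, (a < m)%nat -> F a <= G a) -> rsum m F <= rsum m G.
Proof. induction m; simpl; intros H; [lra|]. assert (H1 := H m (Nat.lt_succ_diag_r m)).
  assert (rsum m F <= rsum m G) by (apply IHm; intros; apply H; lia). lra. Qed.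

Lemma rsum_plus m F G : rsum m (fun a => F a + G a) = rsum m F + rsum m G.
Proof. induction m; simpl; [lra|]. rewrite IHm; lra. Qed.

Lemma rsum_scal m c F : rsum m (fun a => c * F a) = c * rsum m F.
Proof. induction m; simpl; [lra|]. rewrite IHm; lra. Qed.

Lemma rsum_const m c : rsum m (fun _ => c) = INR m * c.
Proof. induction m; simpl rsum; [simpl; lra|]. rewrite IHm, S_INR; lra. Qed.

Lemma rsum_nonneg m F : (forall a, (a < m)%nat -> 0 <= F a) -> 0 <= rsum m F.
Proof. intros H. replace 0 with (rsum m (fun _ => 0)).
  apply rsum_le; auto. rewrite rsum_const; lra. Qed.

Lemma rsum_ge_term m F a : (forall b, (b < m)%nat -> 0 <= F b) -> (a < m)%nat -> F a <= rsum m F.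
Proof. induction m; intros H Ha; [lia|]. simpl.
  assert (0 <= rsum m F) by (apply rsum_nonneg; intros; apply H; lia).
  destruct (Nat.eq_dec a m) as [->|Hne].
  - lra.
  - assert (F a <= rsum m F) by (apply IHm; [intros; apply H; lia| lia]).
    assert (0 <= F m) by (apply H; lia). lra. Qed.

Lemma rsum_add m k F : rsum (m + k) F = rsum m F + rsum k (fun j => F (m + j)%nat).
Proof. induction k; simpl. rewrite Nat.add_0_r; lra. rewrite Nat.add_succ_r; simpl. rewrite IHk; lra. Qed.

Lemma rsum_indic m F a : (a < m)%nat ->
  rsum m (fun c => F c * (if Nat.eq_dec c a then 1 else 0)) = F a.
Proof. induction m; intros Ha; [lia|]. simpl.
  destruct (Nat.eq_dec m a) as [->|Hne].
  - replace (rsum a (fun c => F c * (if Nat.eq_dec c a then 1 else 0))) with (rsum a (fun _ => 0)).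
    rewrite rsum_const; lra. apply rsum_ext; intros c Hc. destruct (Nat.eq_dec c a); [lia|lra].
  - rewrite IHm by lia. lra. Qed.

Lemma rsum_mono_len N N' F : (N <= N')%nat -> (forall k, 0 <= F k) -> rsum N F <= rsum N' F.
Proof. intros H HF. replace N' with (N + (N' - N))%nat by lia. rewrite rsum_add.
  assert (0 <= rsum (N' - N) (fun j => F (N + j)%nat)) by (apply rsum_nonneg; auto). lra. Qed.

Definition lsum {A : Type} (l : list A) (g : A -> R) : R := fold_right Rplus 0 (map g l).

Lemma lsum_app {A} (l1 l2 : list A) g : lsum (l1 ++ l2) g = lsum l1 g + lsum l2 g.
Proof. unfold lsum. rewrite map_app, fold_right_app. induction l1; simpl; [lra|].
  unfold lsum in IHl1. rewrite IHl1. lra. Qed.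

Lemma lsum_flat_map {A B} (l : list A) (h : A -> list B) g :
  lsum (flat_map h l) g = lsum l (fun x => lsum (h x) g).
Proof. induction l; simpl; auto. rewrite lsum_app, IHl. reflexivity. Qed.

Lemma lsum_map {A B} (l : list A) (k : A -> B) g : lsum (map k l) g = lsum l (fun x => g (k x)).
Proof. unfold lsum. rewrite map_map. reflexivity. Qed.

Lemma lsum_seq m g : lsum (seq 0 m) g = rsum m g.
Proof. induction m; [reflexivity|]. rewrite seq_S, lsum_app, IHm. simpl. unfold lsum; simpl. lra. Qed.

Lemma lsum_ext_in {A} (l : list A) g g' : (forall x, In x l -> g x = g' x) -> lsum l g = lsum l g'.
Proof. induction l; simpl; intros H; auto. unfold lsum in *; simpl. rewrite H, IHl; auto. Qed.

Lemma lsum_le_in {A} (l : list A) g g' : (forall x, In x l -> g x <= g' x) -> lsum l g <= lsum l g'.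
Proof. induction l; simpl; intros H; unfold lsum in *; simpl; [lra|].
  assert (H1 := H a (or_introl eq_refl)). assert (fold_right Rplus 0 (map g l) <= fold_right Rplus 0 (map g' l)) by (apply IHl; auto). lra. Qed.

Lemma lsum_plus {A} (l : list A) g g' : lsum l (fun x => g x + g' x) = lsum l g + lsum l g'.
Proof. induction l; unfold lsum in *; simpl; [lra|]. rewrite IHl; lra. Qed.

Lemma lsum_scal {A} (l : list A) c g : lsum l (fun x => c * g x) = c * lsum l g.
Proof. induction l; unfold lsum in *; simpl; [lra|]. rewrite IHl; lra. Qed.

Section Expect.
Variable m : nat.
Variable f1 : nat -> R.
Hypothesis Hf1 : is_pmf m f1.

Definition Ex (K : nat) (F : list nat -> R) : R :=
  lsum (all_seqs m K) (fun xs => F xs * prod_prob f1 xs).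

Lemma all_seqs_in K xs : In xs (all_seqs m K) ->
  length xs = K /\ forall a, In a xs -> (a < m)%nat.
Proof. revert xs; induction K; simpl; intros xs H.
  - destruct H as [<-|[]]. simpl; split; auto; intros a [].
  - apply in_flat_map in H. destruct H as [ys [Hys Hin]]. apply in_map_iff in Hin.
    destruct Hin as [a [<- Ha]]. apply in_seq in Ha. destruct (IHK ys Hys) as [Hl Hm].
    rewrite length_app; simpl; split; [lia|]. intros b Hb. apply in_app_or in Hb.
    destruct Hb as [Hb|[<-|[]]]; [auto|lia]. Qed.

Lemma prod_prob_nonneg xs : (forall a, In a xs -> (a < m)%nat) -> 0 <= prod_prob f1 xs.
Proof. induction xs; simpl; intros H; [lra|]. apply Rmult_le_pos.
  apply (proj1 Hf1); auto. apply IHxs; auto. Qed.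

Lemma prod_prob_app xs a : prod_prob f1 (xs ++ a :: nil) = prod_prob f1 xs * f1 a.
Proof. unfold prod_prob. rewrite fold_right_app. simpl. induction xs; simpl; [lra|].
  rewrite IHxs; lra. Qed.

Lemma Ex_S K F : Ex (S K) F = Ex K (fun xs => rsum m (fun a => f1 a * F (xs ++ a :: nil))).
Proof. unfold Ex. simpl. rewrite lsum_flat_map. apply lsum_ext_in. intros xs _.
  rewrite lsum_map, lsum_seq. rewrite Rmult_comm, <- rsum_scal. apply rsum_ext; intros a _.
  rewrite prod_prob_app. lra. Qed.

Lemma Ex_ext K F G : (forall xs, length xs = K -> (forall a, In a xs -> (a < m)%nat) -> F xs = G xs) ->
  Ex K F = Ex K G.
Proof. intros H. unfold Ex. apply lsum_ext_in. intros xs Hin.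
  destruct (all_seqs_in K xs Hin). rewrite H; auto. Qed.

Lemma Ex_le K F G : (forall xs, length xs = K -> (forall a, In a xs -> (a < m)%nat) -> F xs <= G xs) ->
  Ex K F <= Ex K G.
Proof. intros H. unfold Ex. apply lsum_le_in. intros xs Hin.
  destruct (all_seqs_in K xs Hin). apply Rmult_le_compat_r; auto. apply prod_prob_nonneg; auto. Qed.

Lemma Ex_plus K F G : Ex K (fun xs => F xs + G xs) = Ex K F + Ex K G.
Proof. unfold Ex. rewrite <- lsum_plus. apply lsum_ext_in; intros; lra. Qed.

Lemma Ex_scal K c F : Ex K (fun xs => c * F xs) = c * Ex K F.
Proof. unfold Ex. rewrite <- lsum_scal. apply lsum_ext_in; intros; lra. Qed.

Lemma Ex_one K : Ex K (fun _ => 1) = 1.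
Proof. induction K. unfold Ex; simpl. unfold lsum; simpl. lra.
  rewrite Ex_S. transitivity (Ex K (fun _ => 1)); [|exact IHK]. apply Ex_ext; intros xs _ _.
  transitivity (rsum m f1). apply rsum_ext; intros; lra. apply (proj2 Hf1). Qed.

Lemma Ex_const K c : Ex K (fun _ => c) = c.
Proof. transitivity (c * Ex K (fun _ => 1)).
  rewrite <- Ex_scal; apply Ex_ext; intros; lra. rewrite Ex_one; lra. Qed.

Lemma Ex_nonneg K F : (forall xs, length xs = K -> (forall a, In a xs -> (a < m)%nat) -> 0 <= F xs) ->
  0 <= Ex K F.
Proof. intros H. rewrite <- (Ex_const K 0). apply Ex_le; auto. Qed.

Lemma Ex_fact a b F G :
  Ex (a + b) (fun xs => F (firstn a xs) * G (skipn a xs)) = Ex a F * Ex b G.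
Proof. revert G. induction b; intros G.
  - rewrite Nat.add_0_r. transitivity (Ex a (fun xs => G nil * F xs)).
    + apply Ex_ext; intros xs Hl _. rewrite firstn_all2 by lia. rewrite skipn_all2 by lia. lra.
    + rewrite Ex_scal. unfold Ex at 3; simpl; unfold lsum; simpl. unfold prod_prob; simpl. lra.
  - rewrite Nat.add_succ_r, Ex_S, Ex_S.
    rewrite <- IHb. apply Ex_ext; intros xs Hl _.
    rewrite <- rsum_scal. apply rsum_ext; intros c _.
    rewrite firstn_app, skipn_app. rewrite Hl. replace (a - (a + b))%nat with 0%nat by lia.
    simpl. rewrite app_nil_r. lra. Qed.

Lemma Ex_marg a b F : Ex (a + b) (fun xs => F (firstn a xs)) = Ex a F.
Proof. rewrite <- (Rmult_1_r (Ex a F)). rewrite <- (Ex_one b), <- Ex_fact.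
  apply Ex_ext; intros; lra. Qed.

Lemma Ex_shift a b G : Ex (a + b) (fun xs => G (skipn a xs)) = Ex b G.
Proof. rewrite <- (Rmult_1_l (Ex b G)). rewrite <- (Ex_one a), <- Ex_fact.
  apply Ex_ext; intros; lra. Qed.

Lemma Ex_rsum K L F : Ex K (fun xs => rsum L (fun i => F i xs)) = rsum L (fun i => Ex K (F i)).
Proof. induction L; simpl. apply Ex_const. rewrite Ex_plus, IHL. reflexivity. Qed.

Definition Dv (a : nat) (ys : list nat) : R :=
  INR (count_occ Nat.eq_dec ys a) - INR (length ys) * f1 a.

Lemma f1_le1 a : (a < m)%nat -> 0 <= f1 a <= 1.
Proof. intros Ha. split. apply (proj1 Hf1); auto. rewrite <- (proj2 Hf1).
  apply rsum_ge_term; auto. apply (proj1 Hf1). Qed.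

Lemma Ex_var K a : (a < m)%nat -> Ex K (fun ys => (Dv a ys) ^ 2) <= INR K.
Proof. intros Ha. induction K.
  - unfold Ex; simpl; unfold lsum; simpl; unfold Dv; simpl. lra.
  - rewrite Ex_S, S_INR.
    apply Rle_trans with (Ex K (fun ys => Dv a ys ^ 2 + 1)).
    2: { rewrite Ex_plus, Ex_const. lra. }

    apply Ex_le. intros xs Hl _.
    set (e := fun c : nat => (if Nat.eq_dec c a then 1 else 0) - f1 a).
    assert (HD : forall c, Dv a (xs ++ c :: nil) = Dv a xs + e c).
    { intros c. unfold Dv, e. rewrite count_occ_app, length_app, plus_INR, plus_INR. simpl.
      destruct (Nat.eq_dec c a); simpl; lra. }
    transitivity (rsum m (fun c => f1 c * (Dv a xs)^2 + (2 * Dv a xs) * (f1 c * e c) + f1 c * (e c)^2)).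
    { apply Req_le, rsum_ext; intros c _. rewrite HD. ring. }
    rewrite !rsum_plus.
    assert (H1 : rsum m (fun c => f1 c * e c) = 0).
    { unfold e. transitivity (rsum m (fun c => f1 c * (if Nat.eq_dec c a then 1 else 0)) + (- f1 a) * rsum m f1).
      rewrite <- rsum_scal, <- rsum_plus.
      apply rsum_ext; intros; ring. rewrite rsum_indic, (proj2 Hf1) by auto. ring. }
    assert (H2 : rsum m (fun c => f1 c * e c ^ 2) <= 1).
    { rewrite <- (proj2 Hf1). apply rsum_le; intros c Hc. destruct (f1_le1 c Hc).
      destruct (f1_le1 a Ha). assert (e c ^ 2 <= 1).
      { unfold e. destruct (Nat.eq_dec c a); nra. }
      nra. }
    assert (A1 : rsum m (fun c => f1 c * Dv a xs ^ 2) = Dv a xs ^ 2).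
    { transitivity (rsum m (fun c => Dv a xs ^ 2 * f1 c)). apply rsum_ext; intros; ring.
      rewrite rsum_scal, (proj2 Hf1). ring. }
    assert (A2 : rsum m (fun c => 2 * Dv a xs * (f1 c * e c)) = 0).
    { rewrite rsum_scal, H1. ring. }
    rewrite A1, A2. lra.
Qed.

End Expect.


Lemma in_firstn' (a : nat) n l : In a (firstn n l) -> In a l.
Proof. intros H. rewrite <- (firstn_skipn n l). apply in_or_app; auto. Qed.
Lemma in_skipn' (a : nat) n l : In a (skipn n l) -> In a l.
Proof. intros H. rewrite <- (firstn_skipn n l). apply in_or_app; auto. Qed.

Lemma fsf (xs : list nat) c s t : (s + c <= t)%nat ->
  firstn c (skipn s (firstn t xs)) = firstn c (skipn s xs).
Proof. intros H. rewrite skipn_firstn_comm, firstn_firstn. f_equal. lia. Qed.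

Lemma rsum_indic1 m c : (c < m)%nat -> rsum m (fun a => if Nat.eq_dec c a then 1 else 0) = 1.
Proof. intros Hc. transitivity (rsum m (fun a => (fun _ => 1) a * (if Nat.eq_dec a c then 1 else 0))).
  apply rsum_ext; intros a _. destruct (Nat.eq_dec c a), (Nat.eq_dec a c); try lia; lra.
  apply rsum_indic; auto. Qed.

Lemma rsum_count m ys : (forall a, In a ys -> (a < m)%nat) ->
  rsum m (fun a => INR (count_occ Nat.eq_dec ys a)) = INR (length ys).
Proof. induction ys; intros H.
  - simpl. transitivity (rsum m (fun _ => 0)). apply rsum_ext; auto. rewrite rsum_const; simpl; ring.
  - transitivity (rsum m (fun b => INR (count_occ Nat.eq_dec ys b) + (if Nat.eq_dec a b then 1 else 0))).
    apply rsum_ext; intros b _. simpl count_occ. destruct (Nat.eq_dec a b); [rewrite S_INR|]; lra.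
    rewrite rsum_plus, IHys, rsum_indic1; [| apply H; simpl; auto | intros; apply H; simpl; auto].
    change (length (a::ys)) with (S (length ys)); rewrite S_INR; lra. Qed.

Lemma emp_pmf m ys : ys <> nil -> (forall a, In a ys -> (a < m)%nat) -> is_pmf m (emp ys).
Proof. intros Hne H. assert (Hl : 0 < INR (length ys)).
  { apply lt_0_INR. destruct ys; [congruence|simpl; lia]. }
  split.
  - intros a _. unfold emp. apply Rmult_le_pos; [apply pos_INR| apply Rlt_le, Rinv_0_lt_compat; auto].
  - unfold emp. transitivity (/ INR (length ys) * rsum m (fun a => INR (count_occ Nat.eq_dec ys a))).
    rewrite <- rsum_scal. apply rsum_ext; intros; unfold Rdiv; ring.
    rewrite rsum_count by auto. field. lra. Qed.

Lemma kl_aux_bound k g h : (forall a, (a < k)%nat -> 0 <= g a) -> (forall a, (a < k)%nat -> 0 <= h a) ->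
  match kl_aux k g h with Some s => rsum k (fun a => g a - h a) <= s | None => True end.
Proof. induction k; intros Hg Hh; simpl; [lra|].
  assert (IH := IHk (fun a Ha => Hg a (Nat.lt_lt_succ_r _ _ Ha)) (fun a Ha => Hh a (Nat.lt_lt_succ_r _ _ Ha))).
  destruct (kl_aux k g h) as [s|]; auto.
  destruct (Rlt_dec 0 (g k)) as [Hgk|Hgk].
  - destruct (Rlt_dec 0 (h k)) as [Hhk|Hhk]; auto.
    assert (g k * ln (g k / h k) >= g k - h k).
    { set (u := ln (g k / h k)). assert (E : exp (- u) = h k / g k).
      { rewrite exp_Ropp. unfold u. rewrite exp_ln. field. split; lra.
        apply Rdiv_lt_0_compat; auto. }
      assert (1 + - u <= exp (- u)) by apply exp_ineq1_le. rewrite E in H.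
      assert (g k * (1 - u) <= h k).
      { replace (h k) with (g k * (h k / g k)) by (field; lra). apply Rmult_le_compat_l; lra. }
      lra. }
    lra.
  - assert (g k = 0) by (assert (0 <= g k) by (apply Hg; lia); lra).
    assert (0 <= h k) by (apply Hh; lia). lra.
Qed.

Lemma gibbs m g h : is_pmf m g -> is_pmf m h -> ext_geb (KL m g h) 0 = true.
Proof. intros [Hg1 Hg2] [Hh1 Hh2]. assert (B := kl_aux_bound m g h Hg1 Hh1).
  unfold KL, ext_geb. destruct (kl_aux m g h) as [s|]; auto.
  assert (rsum m (fun a => g a - h a) = 0).
  { transitivity (rsum m g + (-1) * rsum m h). rewrite <- rsum_scal, <- rsum_plus.
    apply rsum_ext; intros; ring. rewrite Hg2, Hh2; ring. }
  destruct (Rle_dec 0 s); auto. lra. Qed.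


Section IPT.
Variable m : nat.
Variable f0 : nat -> R.
Variable q : (nat -> R) -> R.
Variable cS : R.
Variable cD : nat -> R.
Variable fstar : nat -> nat -> R.
Variable sel : nat -> list nat -> nat.
Variable BD : R.
Hypothesis HcS : 0 < cS.
Hypothesis HcD0 : forall n, INR n <= BD -> cD n = 0.
Hypothesis Hfstar : forall n, (1 <= n)%nat -> is_argmin m q f0 (cS / INR n) (fstar n).
Hypothesis Hsel : is_max_selector q sel.

Definition ist k xs := ipt_state m q cS cD fstar sel k xs.

Lemma ist_S k xs : ist (S k) xs =
  let (stopped, tau) := ist k xs in
      if stopped then (true, tau)
      else
        let pre := firstn (S k) xs in
        let ik := sel tau pre in
        let nk := (S k + 1 - ik)%nat in
        let Sk := Qstat q ik (S k) pre in
        let Dge := ext_geb (KL m (emp (window ik (S k) pre)) (fstar nk)) (cD nk) in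
        if Rle_dec cS Sk then
          (if Dge then (true, tau) else (false, (S k + 1)%nat))
        else (false, tau).
Proof. reflexivity. Qed.

Lemma ist_0 xs : ist 0 xs = (false, 1%nat).
Proof. reflexivity. Qed.

Lemma ist_tau k xs : (1 <= snd (ist k xs) <= k + 1)%nat.
Proof. induction k. simpl; lia. rewrite ist_S. destruct (ist k xs) as [st tau]; simpl in *.
  destruct st; simpl; [lia|]. destruct (Rle_dec _ _); [destruct (ext_geb _ _)|]; simpl; lia. Qed.

Lemma ist_stop_mono k xs : fst (ist k xs) = true -> fst (ist (S k) xs) = true.
Proof. rewrite ist_S. destruct (ist k xs) as [st tau]; simpl. intros ->. reflexivity. Qed.

Lemma ist_stop_mono' k k' xs : (k <= k')%nat -> fst (ist k xs) = true -> fst (ist k' xs) = true.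
Proof. induction 1; auto. intros; apply ist_stop_mono; auto. Qed.

Lemma Dge_true k xs tau : (S k <= length xs)%nat -> (forall a, In a xs -> (a < m)%nat) ->
  snd (ist k xs) = tau ->
  let pre := firstn (S k) xs in
  let ik := sel tau pre in
  let nk := (S k + 1 - ik)%nat in
  cS <= Qstat q ik (S k) pre -> INR (S k + 1 - tau) <= BD ->
  ext_geb (KL m (emp (window ik (S k) pre)) (fstar nk)) (cD nk) = true.
Proof. intros Hl Hm Htau pre ik nk HQ HB.
  assert (Hlp : length pre = S k) by (unfold pre; rewrite firstn_length_le; auto).
  assert (Ht := ist_tau k xs). rewrite Htau in Ht.
  destruct (Hsel tau pre) as [Hik _]; [lia|].
  fold ik in Hik.
  unfold Qstat in HQ. destruct (Nat.leb ik (S k)) eqn:Hle; [|lra].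
  apply Nat.leb_le in Hle.
  fold nk in HQ.
  set (w := window ik (S k) pre) in *.
  assert (Hlw : length w = nk).
  { unfold w, window. rewrite firstn_length_le; auto. rewrite length_skipn. lia. }
  assert (Hwm : forall a, In a w -> (a < m)%nat).
  { intros a Ha. apply Hm. unfold w, window, pre in Ha.
    apply in_firstn', in_skipn', in_firstn' in Ha. auto. }
  assert (Hnk : (1 <= nk)%nat) by (unfold nk; lia).
  assert (Hw : is_pmf m (emp w)).
  { apply emp_pmf; auto. intros E; rewrite E in Hlw; simpl in Hlw; lia. }
  assert (HnkR : 0 < INR nk) by (apply lt_0_INR; lia).
  assert (Hq : cS / INR nk <= q (emp w)).
  { unfold Rdiv. apply Rmult_le_reg_l with (INR nk); auto.
    replace (INR nk * (cS * / INR nk)) with cS by (field; lra). auto. }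
  destruct (Hfstar nk Hnk) as [Hfs _]; [exists (emp w); auto|].
  rewrite HcD0. apply gibbs; auto.
  apply Rle_trans with (INR (S k + 1 - tau)); auto. apply le_INR. unfold nk; lia.
Qed.

Lemma sel_ge k xs tau i : (S k <= length xs)%nat -> snd (ist k xs) = tau ->
  (tau <= i <= S k + 1)%nat ->
  Qstat q i (S k) (firstn (S k) xs) <= Qstat q (sel tau (firstn (S k) xs)) (S k) (firstn (S k) xs).
Proof. intros Hl Htau Hi.
  assert (Hlp : length (firstn (S k) xs) = S k) by (rewrite firstn_length_le; auto).
  assert (Ht := ist_tau k xs). rewrite Htau in Ht.
  destruct (Hsel tau (firstn (S k) xs)) as [_ H]; [lia|].
  rewrite Hlp in H. apply H. lia. Qed.

Lemma stop_C k xs i : (S k <= length xs)%nat -> (forall a, In a xs -> (a < m)%nat) ->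
  fst (ist k xs) = false -> (snd (ist k xs) <= i <= S k)%nat ->
  cS <= Qstat q i (S k) (firstn (S k) xs) -> INR (S k + 1 - snd (ist k xs)) <= BD ->
  fst (ist (S k) xs) = true.
Proof. intros Hl Hm Hst Hi HQ HB.
  assert (HQ' := sel_ge k xs (snd (ist k xs)) i Hl eq_refl ltac:(lia)).
  assert (HD := Dge_true k xs (snd (ist k xs)) Hl Hm eq_refl ltac:(cbv zeta; lra) HB).
  rewrite ist_S. destruct (ist k xs) as [st tau]. simpl in *. subst st.
  destruct (Rle_dec _ _); [|lra]. rewrite HD. reflexivity. Qed.

Lemma stop_C' k xs i : (S k <= length xs)%nat ->
  fst (ist k xs) = false -> (snd (ist k xs) <= i <= S k)%nat ->
  cS <= Qstat q i (S k) (firstn (S k) xs) ->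
  fst (ist (S k) xs) = true \/ ist (S k) xs = (false, S k + 1)%nat.
Proof. intros Hl Hst Hi HQ.
  assert (HQ' := sel_ge k xs (snd (ist k xs)) i Hl eq_refl ltac:(lia)).
  rewrite ist_S. destruct (ist k xs) as [st tau]. simpl in *. subst st.
  destruct (Rle_dec _ _); [|lra]. destruct (ext_geb _ _); auto. Qed.

Lemma restart_B k xs : (S k <= length xs)%nat -> (forall a, In a xs -> (a < m)%nat) ->
  fst (ist (S k) xs) = false -> snd (ist (S k) xs) <> snd (ist k xs) ->
  fst (ist k xs) = false /\ snd (ist (S k) xs) = (S k + 1)%nat /\ BD < INR (S k + 1 - snd (ist k xs)).
Proof. intros Hl Hm Hst Hne.
  destruct (Rle_dec (INR (S k + 1 - snd (ist k xs))) BD) as [HB|HB].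
  2: { split; [|split; [|lra]].
       - destruct (fst (ist k xs)) eqn:E; auto. rewrite (ist_stop_mono k xs E) in Hst; congruence.
       - revert Hst Hne. rewrite ist_S. destruct (ist k xs) as [st tau]. simpl.
         destruct st; simpl; [congruence|].
         destruct (Rle_dec _ _); [destruct (ext_geb _ _)|]; simpl; congruence. }
  exfalso. revert Hst Hne.
  assert (HD : forall (Hc : cS <= Qstat q (sel (snd (ist k xs)) (firstn (S k) xs)) (S k) (firstn (S k) xs)),
    ext_geb (KL m (emp (window (sel (snd (ist k xs)) (firstn (S k) xs)) (S k) (firstn (S k) xs)))
      (fstar (S k + 1 - sel (snd (ist k xs)) (firstn (S k) xs))))
      (cD (S k + 1 - sel (snd (ist k xs)) (firstn (S k) xs))) = true).
  { intros Hc. apply (Dge_true k xs (snd (ist k xs)) Hl Hm eq_refl Hc HB). }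
  rewrite ist_S. destruct (ist k xs) as [st tau]. simpl in *.
  destruct st; simpl; [congruence|].
  destruct (Rle_dec _ _) as [Hc|Hc]; [rewrite (HD Hc)|]; simpl; congruence. Qed.

Variables n h L : nat.
Hypothesis Hn : n = (L * h)%nat.
Hypothesis HL1 : (1 <= L)%nat.
Hypothesis Hh1 : (1 <= h)%nat.
Hypothesis HBD : INR ((L + 1) * h) <= BD.

Definition good (j : nat) (xs : list nat) : Prop :=
  cS <= INR n * q (emp (firstn n (skipn (j * h) xs))).

Lemma n_pos : (1 <= n)%nat.
Proof. rewrite Hn. nia. Qed.

Lemma good_Q j xs : good j xs ->
  cS <= Qstat q (j * h + 1) (j * h + n) (firstn (j * h + n) xs).
Proof. intros Hg. assert (Hn1 := n_pos). unfold Qstat.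
  replace (Nat.leb (j * h + 1) (j * h + n)) with true by (symmetry; apply Nat.leb_le; lia).
  replace (j * h + n + 1 - (j * h + 1))%nat with n by lia.
  unfold window. replace (j * h + n + 1 - (j * h + 1))%nat with n by lia.
  replace (j * h + 1 - 1)%nat with (j * h)%nat by lia.
  rewrite fsf by lia. exact Hg. Qed.

Lemma lemma_G xs r i' : (i' * h + n <= length xs)%nat -> (forall a, In a xs -> (a < m)%nat) ->
  (r <= i' * h)%nat -> (i' * h < r + h)%nat ->
  fst (ist r xs) = false -> snd (ist r xs) = S r -> good i' xs ->
  fst (ist (i' * h + n) xs) = true.
Proof. intros Hl Hm Hr1 Hr2 Hst Htau Hg. assert (Hn1 := n_pos).
  set (e := (i' * h + n)%nat) in *.
  destruct (fst (ist e xs)) eqn:He; auto. exfalso.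
  assert (HBn : forall d, (d < n + h)%nat -> INR d <= BD).
  { intros d Hd. apply Rle_trans with (INR ((L + 1) * h)); auto. apply le_INR. nia. }
  assert (Hns : forall k, (k <= e)%nat -> fst (ist k xs) = false).
  { intros k Hk. destruct (fst (ist k xs)) eqn:E; auto.
    rewrite (ist_stop_mono' k e xs Hk E) in He; congruence. }
  assert (Hc : forall d, (r + d < e)%nat -> snd (ist (r + d) xs) = S r).
  { induction d; intros Hd. rewrite Nat.add_0_r; auto.
    rewrite Nat.add_succ_r.
    destruct (Nat.eq_dec (snd (ist (S (r + d)) xs)) (snd (ist (r + d) xs))) as [E|E].
    - rewrite E. apply IHd. lia.
    - destruct (restart_B (r + d) xs ltac:(lia) Hm (Hns (S (r + d)) ltac:(lia)) E) as [_ [_ HB]].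
      rewrite IHd in HB by lia. exfalso.
      assert (INR (S (r + d) + 1 - S r) <= BD) by (apply HBn; lia). lra. }
  destruct e as [|k0] eqn:Ee; [lia|].
  assert (HT := Hc (k0 - r)%nat ltac:(lia)). replace (r + (k0 - r))%nat with k0 in HT by lia.
  assert (HS := stop_C k0 xs (i' * h + 1) ltac:(lia) Hm (Hns k0 ltac:(lia))).
  rewrite HT in HS.
  assert (HQ := good_Q i' xs Hg). unfold e in Ee. rewrite Ee in HQ.
  rewrite HS in He; [congruence|lia|exact HQ|].
  apply HBn. lia. Qed.

Lemma lemma_H xs j : (j * h + n <= length xs)%nat -> (forall a, In a xs -> (a < m)%nat) ->
  good j xs -> fst (ist (j * h + n) xs) = false ->
  exists r, (j * h <= r <= j * h + n)%nat /\ fst (ist r xs) = false /\ snd (ist r xs) = S r.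
Proof. intros Hl Hm Hg He. assert (Hn1 := n_pos).
  assert (Hns : forall k, (k <= j * h + n)%nat -> fst (ist k xs) = false).
  { intros k Hk. destruct (fst (ist k xs)) eqn:E; auto.
    rewrite (ist_stop_mono' k _ xs Hk E) in He; congruence. }
  remember (j * h + n)%nat as e eqn:Ee.
  destruct e as [|k0]; [lia|].
  destruct (le_lt_dec (snd (ist k0 xs)) (j * h + 1)) as [Hle|Hlt].
  - assert (HQ := good_Q j xs Hg). rewrite <- Ee in HQ.
    destruct (stop_C' k0 xs (j * h + 1) ltac:(lia) (Hns k0 ltac:(lia)) ltac:(split; lia) HQ) as [E|E].
    + congruence.
    + exists (S k0). split; [lia|]. rewrite E. simpl. split; auto. lia.
  - assert (Hdisc : forall k, (j * h + 1 < snd (ist k xs))%nat ->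
      exists k', (k' < k)%nat /\ (snd (ist k' xs) <= j * h + 1)%nat /\ (j * h + 1 < snd (ist (S k') xs))%nat).
    { induction k; intros Hk. rewrite ist_0 in Hk; simpl in Hk; lia.
      destruct (le_lt_dec (snd (ist k xs)) (j * h + 1)) as [H1|H1].
      - exists k; auto.
      - destruct (IHk H1) as [k' [? ?]]. exists k'; split; [lia|auto]. }
    destruct (Hdisc k0 Hlt) as [k' [Hk' [H1 H2]]].
    destruct (restart_B k' xs ltac:(lia) Hm (Hns (S k') ltac:(lia)) ltac:(lia)) as [_ [HT _]].
    exists (S k'). split; [lia|]. split; [apply Hns; lia|]. rewrite HT; lia. Qed.

Lemma ceil_div r : exists i, (r <= i * h /\ i * h < r + h)%nat.
Proof. exists ((r + h - 1) / h)%nat.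
  assert (E := Nat.div_mod (r + h - 1) h ltac:(lia)).
  assert (M := Nat.mod_upper_bound (r + h - 1) h ltac:(lia)).
  rewrite Nat.mul_comm. lia. Qed.

Lemma block_lemma xs j : ((j + 2 * L) * h <= length xs)%nat -> (forall a, In a xs -> (a < m)%nat) ->
  (forall i, (i <= L)%nat -> good (j + i) xs) -> fst (ist ((j + 2 * L) * h) xs) = true.
Proof. intros Hl Hm Hg. assert (Hn1 := n_pos).
  destruct (fst (ist ((j + 2 * L) * h) xs)) eqn:He; auto. exfalso.
  assert (Hns : forall k, (k <= (j + 2 * L) * h)%nat -> fst (ist k xs) = false).
  { intros k Hk. destruct (fst (ist k xs)) eqn:E; auto.
    rewrite (ist_stop_mono' k _ xs Hk E) in He; congruence. }
  assert (Hg0 := Hg 0%nat ltac:(lia)). rewrite Nat.add_0_r in Hg0.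
  destruct (lemma_H xs j ltac:(nia) Hm Hg0 (Hns (j * h + n)%nat ltac:(nia))) as [r [Hr [Hst Htau]]].
  destruct (ceil_div r) as [i' [Hi1 Hi2]].
  assert (Hj1 : (j <= i')%nat) by nia.
  assert (Hj2 : (i' <= j + L)%nat) by nia.
  assert (HG := lemma_G xs r i' ltac:(nia) Hm Hi1 Hi2 Hst Htau).
  replace i' with (j + (i' - j))%nat in HG by lia.
  rewrite Hns in HG; [|nia]. discriminate HG. apply Hg. lia. Qed.

Lemma first_window xs : (n <= length xs)%nat -> (forall a, In a xs -> (a < m)%nat) ->
  good 0 xs -> fst (ist n xs) = true.
Proof. intros Hl Hm Hg.
  assert (H := lemma_G xs 0 0 ltac:(simpl; lia) Hm ltac:(lia) ltac:(lia) eq_refl eq_refl Hg).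
  simpl in H. exact H. Qed.

Variable f1 : nat -> R.
Hypothesis Hf1 : is_pmf m f1.
Variables Lip gam q1' : R.
Hypothesis HLip : lipschitz_l1 m q Lip.
Hypothesis Hgam : 0 < gam.
Hypothesis Hcond : (Rabs Lip + 1) * INR m * gam <= q f1 - q1'.
Hypothesis Hnq : cS <= INR n * q1'.

Definition psi (ys : list nat) : R := rsum m (fun a => (Dv f1 a ys) ^ 2) / (INR n * gam) ^ 2.

Lemma nR_pos : 0 < INR n.
Proof. apply lt_0_INR. assert (H := n_pos). lia. Qed.

Lemma psi_nonneg ys : 0 <= psi ys.
Proof. unfold psi. assert (H := nR_pos). apply Rmult_le_pos.
  apply rsum_nonneg; intros; apply pow2_ge_0. apply Rlt_le, Rinv_0_lt_compat.
  apply pow_lt. nra. Qed.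

Lemma psi_ge1 ys : length ys = n -> (forall a, In a ys -> (a < m)%nat) ->
  ~ (cS <= INR n * q (emp ys)) -> 1 <= psi ys.
Proof. intros Hl Hm Hng. assert (Hn0 := nR_pos).
  destruct (Rle_dec 1 (psi ys)) as [H|H]; auto. exfalso. apply Hng.
  assert (Hng2 : 0 < (INR n * gam) ^ 2) by (apply pow_lt; nra).
  assert (Hs : rsum m (fun a => Dv f1 a ys ^ 2) < (INR n * gam) ^ 2).
  { unfold psi in H. apply Rnot_le_lt in H.
    apply Rmult_lt_reg_r with (/ (INR n * gam) ^ 2). apply Rinv_0_lt_compat; auto.
    rewrite Rinv_r by lra. exact H. }
  assert (Hterm : forall a, (a < m)%nat -> Rabs (emp ys a - f1 a) <= gam).
  { intros a Ha.
    assert (H1 : Dv f1 a ys ^ 2 <= rsum m (fun a => Dv f1 a ys ^ 2)).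
    { apply (rsum_ge_term m (fun a => Dv f1 a ys ^ 2)); auto. intros; apply pow2_ge_0. }
    assert (E : emp ys a - f1 a = Dv f1 a ys / INR n).
    { unfold emp, Dv. rewrite Hl. field. lra. }
    rewrite E. unfold Rdiv. rewrite Rabs_mult, Rabs_inv, (Rabs_right (INR n)) by lra.
    apply Rmult_le_reg_r with (INR n); auto. rewrite Rmult_assoc, Rinv_l, Rmult_1_r by lra.
    assert (Dv f1 a ys ^ 2 < (INR n * gam) ^ 2) by lra.
    destruct (Rle_dec (Rabs (Dv f1 a ys)) (gam * INR n)) as [Hr|Hr]; auto.
    exfalso. apply Rnot_le_lt in Hr.
    assert (Dv f1 a ys ^ 2 = Rabs (Dv f1 a ys) ^ 2) by (unfold Rabs; destruct (Rcase_abs _); ring).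
    assert (Hp : 0 < gam * INR n) by nra.
    assert (0 < (Rabs (Dv f1 a ys) - gam * INR n) * (Rabs (Dv f1 a ys) + gam * INR n)) by (apply Rmult_lt_0_compat; lra).
    assert ((INR n * gam) ^ 2 = (gam * INR n) * (gam * INR n)) by ring.
    assert (Rabs (Dv f1 a ys) ^ 2 = Rabs (Dv f1 a ys) * Rabs (Dv f1 a ys)) by ring.
    nra. }
  assert (Hl1 : l1 m (emp ys) f1 <= INR m * gam).
  { unfold l1. rewrite <- rsum_const. apply rsum_le; auto. }
  assert (Hl10 : 0 <= l1 m (emp ys) f1) by (apply rsum_nonneg; intros; apply Rabs_pos).
  assert (Hpe : is_pmf m (emp ys)).
  { apply emp_pmf; auto. intros E; rewrite E in Hl; simpl in Hl. assert (Hn1 := n_pos). lia. }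
  assert (HL := HLip (emp ys) f1 Hpe Hf1).
  assert (Lip * l1 m (emp ys) f1 <= (Rabs Lip + 1) * (INR m * gam)).
  { assert (Lip <= Rabs Lip + 1) by (assert (Lip <= Rabs Lip) by apply RRle_abs; lra).
    apply Rle_trans with ((Rabs Lip + 1) * l1 m (emp ys) f1).
    apply Rmult_le_compat_r; auto. apply Rmult_le_compat_l; auto.
    assert (0 <= Rabs Lip) by apply Rabs_pos; lra. }
  assert (q f1 - q (emp ys) <= Rabs (q (emp ys) - q f1)).
  { rewrite Rabs_minus_sym. apply RRle_abs. }
  assert (q1' <= q (emp ys)) by nra.
  apply Rle_trans with (INR n * q1'); auto. apply Rmult_le_compat_l; lra. Qed.

Lemma Ex_psi : Ex m f1 n psi <= INR m / (INR n * gam ^ 2).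
Proof. assert (Hn0 := nR_pos). unfold psi, Rdiv at 1.
  transitivity (Ex m f1 n (fun ys => / (INR n * gam) ^ 2 * rsum m (fun a => Dv f1 a ys ^ 2))).
  apply Req_le, Ex_ext; intros; ring.
  rewrite Ex_scal, Ex_rsum.
  assert (rsum m (fun i => Ex m f1 n (fun ys => Dv f1 i ys ^ 2)) <= INR m * INR n).
  { rewrite <- rsum_const. apply rsum_le. intros a Ha. apply Ex_var; auto. }
  apply Rle_trans with (/ (INR n * gam) ^ 2 * (INR m * INR n)).
  apply Rmult_le_compat_l; auto. apply Rlt_le, Rinv_0_lt_compat, pow_lt; nra.
  right. field. split; lra. auto. Qed.

Lemma prob_Ex k : prob_not_stopped m q cS cD fstar sel f1 k =
  Ex m f1 k (fun xs => if fst (ist k xs) then 0 else 1).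
Proof. unfold prob_not_stopped, Ex, lsum, ist. f_equal. apply map_ext. intros xs.
  destruct (fst _); ring. Qed.

Lemma P_le1 k : prob_not_stopped m q cS cD fstar sel f1 k <= 1.
Proof. rewrite prob_Ex. apply Rle_trans with (Ex m f1 k (fun _ => 1)).
  apply Ex_le; auto. intros; destruct (fst _); lra. rewrite Ex_one; auto; lra. Qed.

Lemma P_first k : (n <= k)%nat -> prob_not_stopped m q cS cD fstar sel f1 k <= Ex m f1 n psi.
Proof. intros Hk. rewrite prob_Ex.
  replace k with (n + (k - n))%nat at 1 by lia.
  rewrite <- (Ex_marg m f1 Hf1 n (k - n) psi). replace (n + (k - n))%nat with k by lia.
  apply Ex_le; auto. intros xs Hl Hm.
  destruct (fst (ist k xs)) eqn:E; [apply psi_nonneg|].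
  apply psi_ge1. rewrite firstn_length_le; lia.
  intros a Ha; apply Hm; apply in_firstn' in Ha; auto.
  intros Hg. assert (HS := first_window xs ltac:(lia) Hm).
  assert (fst (ist n xs) = true) by (apply HS; unfold good; simpl; exact Hg).
  rewrite (ist_stop_mono' n k xs Hk H) in E. congruence. Qed.

Definition B := (2 * n)%nat.
Definition phi (ys : list nat) : R := rsum (S L) (fun i => psi (firstn n (skipn (i * h) ys))).

Fixpoint Pi (b : nat) (xs : list nat) : R :=
  match b with
  | O => 1
  | S b' => Pi b' (firstn (b' * B) xs) * phi (firstn B (skipn (b' * B) xs))
  end.

Lemma phi_nonneg ys : 0 <= phi ys.
Proof. apply rsum_nonneg; intros; apply psi_nonneg. Qed.

Lemma Pi_nonneg b xs : 0 <= Pi b xs.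
Proof. revert xs; induction b; intros; simpl; [lra|]. apply Rmult_le_pos; auto. apply phi_nonneg. Qed.

Lemma Pi_firstn b xs K : (b * B <= K)%nat -> Pi b (firstn K xs) = Pi b xs.
Proof. revert xs K; induction b; intros xs K Hk; simpl; auto.
  rewrite firstn_firstn. replace (Init.Nat.min (b * B) K) with (b * B)%nat by lia.
  rewrite fsf by lia. reflexivity. Qed.

Lemma Pi_ge1 b xs : (forall b', (b' < b)%nat -> 1 <= phi (firstn B (skipn (b' * B) xs))) -> 1 <= Pi b xs.
Proof. induction b; intros H; simpl; [lra|]. rewrite Pi_firstn by lia.
  assert (1 <= Pi b xs) by (apply IHb; intros; apply H; lia).
  assert (1 <= phi (firstn B (skipn (b * B) xs))) by (apply H; lia). nra. Qed.

Lemma Ex_Pi b : Ex m f1 (b * B) (Pi b) = (Ex m f1 B phi) ^ b.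
Proof. induction b. simpl. rewrite Ex_const by auto. reflexivity.
  replace (S b * B)%nat with (b * B + B)%nat by lia.
  transitivity (Ex m f1 (b * B + B) (fun xs => Pi b (firstn (b * B) xs) * phi (skipn (b * B) xs))).
  apply Ex_ext; intros xs Hl _. simpl. rewrite (firstn_all2 (n := B)); auto.
  rewrite length_skipn. lia.
  rewrite Ex_fact by auto. rewrite IHb. simpl. ring. Qed.

Lemma Ex_phi : Ex m f1 B phi <= INR (S L) * Ex m f1 n psi.
Proof. unfold phi. rewrite Ex_rsum. rewrite <- rsum_const. apply Req_le, rsum_ext. intros i Hi.
  assert (HiB : (i * h + n <= B)%nat) by (unfold B; nia).
  replace B with (i * h + (n + (B - i * h - n)))%nat by lia.
  rewrite (Ex_shift m f1 Hf1 (i * h) (n + (B - i * h - n)) (fun zs => psi (firstn n zs))).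
  apply Ex_marg; auto. all: auto. Qed.

Lemma P_blocks k b : (b * B <= k)%nat -> prob_not_stopped m q cS cD fstar sel f1 k <= (Ex m f1 B phi) ^ b.
Proof. intros Hk. rewrite prob_Ex. rewrite <- Ex_Pi.
  replace k with (b * B + (k - b * B))%nat at 1 by lia.
  rewrite <- (Ex_marg m f1 Hf1 (b * B) (k - b * B) (Pi b)). replace (b * B + (k - b * B))%nat with k by lia.
  apply Ex_le; auto. intros xs Hl Hm.
  destruct (fst (ist k xs)) eqn:E; [apply Pi_nonneg|].
  rewrite Pi_firstn by lia. apply Pi_ge1. intros b' Hb'.
  destruct (Rle_dec 1 (phi (firstn B (skipn (b' * B) xs)))) as [Hp|Hp]; auto. exfalso.
  assert (Hgood : forall i, (i <= L)%nat -> good (2 * L * b' + i) xs).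
  { intros i Hi. unfold good.
    assert (Hw : firstn n (skipn ((2 * L * b' + i) * h) xs) = firstn n (skipn (i * h) (firstn B (skipn (b' * B) xs)))).
    { rewrite fsf by (unfold B; nia). rewrite skipn_skipn. f_equal. f_equal. unfold B. rewrite Hn. ring. }
    rewrite Hw.
    destruct (Rle_dec cS (INR n * q (emp (firstn n (skipn (i * h) (firstn B (skipn (b' * B) xs))))))) as [Hc|Hc]; auto.
    exfalso. apply Hp. apply Rle_trans with (psi (firstn n (skipn (i * h) (firstn B (skipn (b' * B) xs))))).
    - apply psi_ge1; auto.
      + rewrite <- Hw. rewrite firstn_length_le; auto. rewrite length_skipn. unfold B in *. nia.
      + intros a Ha; apply Hm. apply in_firstn', in_skipn', in_firstn', in_skipn' in Ha; auto.
    - unfold phi. apply (rsum_ge_term (S L) (fun i => psi (firstn n (skipn (i * h) (firstn B (skipn (b' * B) xs)))))).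
      intros; apply psi_nonneg. lia. }
  assert (HB := block_lemma xs (2 * L * b') ltac:(unfold B in *; rewrite Hn in *; nia) Hm Hgood).
  rewrite (ist_stop_mono' ((2 * L * b' + 2 * L) * h)%nat k xs ltac:(unfold B in *; rewrite Hn in *; nia) HB) in E. congruence. Qed.

Lemma ET_bound N : INR (S L) * (INR m / (INR n * gam ^ 2)) <= 1 / 2 ->
  ET_partial m q cS cD fstar sel f1 N <= INR n * (1 + 5 * (INR (S L) * (INR m / (INR n * gam ^ 2)))).
Proof. set (pp := INR (S L) * (INR m / (INR n * gam ^ 2))). intros Hpp.
  assert (Hn0 := nR_pos).
  assert (Hp0 : 0 <= INR m / (INR n * gam ^ 2)).
  { apply Rmult_le_pos. apply pos_INR. apply Rlt_le, Rinv_0_lt_compat. apply Rmult_lt_0_compat; auto. apply pow_lt; auto. }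
  assert (HSL : 1 <= INR (S L)) by (rewrite S_INR; assert (H := pos_INR L); lra).
  assert (Hpp0 : 0 <= pp) by (unfold pp; nra).
  assert (Hpsi : Ex m f1 n psi <= pp).
  { apply Rle_trans with (INR m / (INR n * gam ^ 2)). apply Ex_psi. unfold pp; nra. }
  assert (Hphi : Ex m f1 B phi <= pp).
  { apply Rle_trans with (INR (S L) * Ex m f1 n psi). apply Ex_phi.
    apply Rmult_le_compat_l. apply pos_INR. apply Ex_psi. }
  assert (Hphi0 : 0 <= Ex m f1 B phi) by (apply Ex_nonneg; auto; intros; apply phi_nonneg).
  assert (Hn1 := n_pos).
  assert (HB0 : (B <> 0)%nat) by (unfold B; lia).
  set (g := fun k : nat => if Nat.ltb k n then 1 else pp ^ (Nat.max 1 (k / B))).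
  assert (Hg0 : forall k, 0 <= g k).
  { intros k; unfold g. destruct (Nat.ltb k n); [lra|]. apply pow_le; auto. }
  assert (Hg : forall k, prob_not_stopped m q cS cD fstar sel f1 k <= g k).
  { intros k. unfold g. destruct (Nat.ltb k n) eqn:E; [apply P_le1|].
    apply Nat.ltb_ge in E.
    destruct (k / B)%nat as [|b] eqn:Eb.
    - simpl. rewrite Rmult_1_r. apply Rle_trans with (Ex m f1 n psi); auto. apply P_first; auto.
    - replace (Nat.max 1 (S b)) with (S b) by lia.
      apply Rle_trans with ((Ex m f1 B phi) ^ S b). apply P_blocks.
      rewrite <- Eb. assert (H := Nat.div_mod k B HB0). rewrite Nat.mul_comm. lia.
      apply pow_incr. split; auto. }
  assert (Hclaim : forall T, rsum (B * S T) g + 4 * INR n * pp ^ (S T) <= INR n + 5 * INR n * pp).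
  { induction T.
    - replace (B * 1)%nat with (n + n)%nat by (unfold B; lia). rewrite rsum_add.
      assert (E1 : rsum n g = INR n).
      { rewrite <- (Rmult_1_r (INR n)), <- rsum_const. apply rsum_ext; intros k Hk. unfold g.
        replace (Nat.ltb k n) with true by (symmetry; apply Nat.ltb_lt; auto). reflexivity. }
      assert (E2 : rsum n (fun j => g (n + j)%nat) = INR n * pp).
      { rewrite <- rsum_const. apply rsum_ext; intros k Hk. unfold g.
        replace (Nat.ltb (n + k) n) with false by (symmetry; apply Nat.ltb_ge; lia).
        rewrite (Nat.div_small (n + k) B) by (unfold B; lia). simpl. ring. }
      rewrite E1, E2. simpl. lra.
    - replace (B * S (S T))%nat with (B * S T + B)%nat by lia. rewrite rsum_add.
      assert (E2 : rsum B (fun j => g (B * S T + j)%nat) = INR B * pp ^ S T).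
      { rewrite <- rsum_const. apply rsum_ext; intros k Hk. unfold g.
        replace (Nat.ltb (B * S T + k) n) with false by (symmetry; apply Nat.ltb_ge; unfold B in *; nia).
        rewrite Nat.mul_comm, Nat.div_add_l, Nat.div_small by auto.
        replace (Nat.max 1 (S T + 0)) with (S T) by lia. reflexivity. }
      rewrite E2. unfold B in *. rewrite mult_INR. simpl INR at 1.
      assert (0 <= pp ^ S T) by (apply pow_le; auto).
      replace (pp ^ S (S T)) with (pp * pp ^ S T) by reflexivity.
      assert (0 <= (1/2 - pp) * (INR n * pp ^ S T)) by (apply Rmult_le_pos; nra).
      nra. }
  unfold ET_partial. apply Rle_trans with (rsum (S N) g). apply rsum_le; auto.
  apply Rle_trans with (rsum (B * S N) g). apply rsum_mono_len; auto. unfold B; nia.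
  assert (H := Hclaim N). assert (0 <= pp ^ S N) by (apply pow_le; auto).
  assert (0 <= 4 * INR n * pp ^ S N) by (apply Rmult_le_pos; lra).
  lra. Qed.

End IPT.


Lemma div_le_l a b c : 0 < b -> a <= c * b -> a / b <= c.
Proof. intros Hb H. unfold Rdiv. apply Rmult_le_reg_r with b; auto.
  rewrite Rmult_assoc, Rinv_l, Rmult_1_r by lra. exact H. Qed.

Lemma div_le_r a b c : 0 < b -> c * b <= a -> c <= a / b.
Proof. intros Hb H. unfold Rdiv. apply Rmult_le_reg_r with b; auto.
  rewrite Rmult_assoc, Rinv_l, Rmult_1_r by lra. exact H. Qed.

Lemma lt_of_div a b c : 0 < b -> a / b < c -> a < c * b.
Proof. intros Hb H. replace a with (a / b * b) by (field; lra). apply Rmult_lt_compat_r; auto. Qed.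

Theorem lemma3
  (m : nat) (f0 : nat -> R) (q : (nat -> R) -> R) (L qlow rho : R)
  (P1 : (nat -> R) -> Prop)
  (Hf0 : is_pmf m f0)
  (Hqc : quasiconcave m q)
  (HL : lipschitz_l1 m q L)
  (Hq0 : q f0 < 0) (Hqlow : 0 < qlow)
  (HP1 : forall f, P1 f -> is_pmf m f /\ qlow <= q f)
  (HP1ne : exists f, P1 f)
  (Hrho : 0 < rho)
  (cD : R -> nat -> R)
  (HcDnn : forall cS n, 0 < cS -> 0 <= cD cS n)
  (HcD0 : forall cS n, 0 < cS -> INR n <= (1 + rho) * cS / qlow -> cD cS n = 0)
  (fstar : R -> nat -> nat -> R)
  (Hfstar : forall cS n, 0 < cS -> (1 <= n)%nat ->
              is_argmin m q f0 (cS / INR n) (fstar cS n))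
  (sel : nat -> list nat -> nat)
  (Hsel : is_max_selector q sel)
  (f1 : nat -> R) (Hf1 : P1 f1) :
  forall eps, 0 < eps ->
    exists C, forall cS, C < cS ->
      forall N, ET_partial m q cS (cD cS) (fstar cS) sel f1 N <= cS * (/ q f1 + eps).
Proof.
  intros eps Heps.
  destruct (HP1 f1 Hf1) as [Hpf1 Hq1].
  set (q1 := q f1) in *.
  assert (Hq1p : 0 < q1) by lra.
  assert (Hm : (1 <= m)%nat).
  { destruct m; [|lia]. destruct Hf0 as [_ H]. simpl in H. lra. }
  assert (HmR : 1 <= INR m) by (apply (le_INR 1) in Hm; simpl in Hm; lra).
  set (x := Rmin rho 1 / 4).
  assert (Hx0 : 0 < x) by (unfold x; apply Rmin_case; lra).
  assert (Hx1 : x <= 1 / 4) by (unfold x; assert (Rmin rho 1 <= 1) by apply Rmin_r; lra).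
  assert (Hxr : x <= rho / 4) by (unfold x; assert (Rmin rho 1 <= rho) by apply Rmin_l; lra).
  set (th := Rmin x (eps * q1 / 2)).
  assert (Hth0 : 0 < th) by (unfold th; apply Rmin_case; nra).
  assert (Hthx : th <= x) by apply Rmin_l.
  assert (Hthe : th <= eps * q1 / 2) by apply Rmin_r.
  set (q1' := q1 / (1 + th)).
  assert (Hq1'0 : 0 < q1') by (unfold q1'; apply Rdiv_lt_0_compat; lra).
  set (K := Rabs L + 1).
  assert (HK : 0 < K) by (unfold K; assert (0 <= Rabs L) by apply Rabs_pos; lra).
  set (dl := q1 - q1').
  assert (Hdl : dl = q1 * th / (1 + th)) by (unfold dl, q1'; field; lra).
  assert (Hdl0 : 0 < dl) by (rewrite Hdl; apply Rdiv_lt_0_compat; nra).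
  set (gam := dl / (K * INR m)).
  assert (Hgam : 0 < gam) by (unfold gam; apply Rdiv_lt_0_compat; nra).
  assert (Hcond : (Rabs L + 1) * INR m * gam <= q f1 - q1').
  { fold K q1 dl. unfold gam. right. field. split; lra. }
  destruct (INR_archimed 1 (1 / x) ltac:(lra)) as [Lb HLb].
  rewrite Rmult_1_r in HLb.
  assert (Hix : 0 < 1 / x) by (apply Rdiv_lt_0_compat; lra).
  assert (HLb1 : (1 <= Lb)%nat).
  { destruct Lb; [simpl in HLb; lra | lia]. }
  assert (HLbR : 1 <= INR Lb) by (apply (le_INR 1) in HLb1; simpl in HLb1; lra).
  assert (Hux : 1 / INR Lb <= x).
  { apply div_le_l; [lra|]. assert (x * (1 / x) = 1) by (field; lra). nra. }
  set (C1 := 4 * (INR Lb + 1) * qlow / rho).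
  set (C2 := 2 * (INR Lb + 1) * INR m * q1' / gam ^ 2).
  set (C3 := 2 * (INR Lb + 5 * (INR Lb + 1) * INR m / gam ^ 2) / eps).
  exists (Rmax 0 (Rmax C1 (Rmax C2 C3))).
  intros cS HcS N.
  assert (HcS0 : 0 < cS) by (eapply Rle_lt_trans; [apply Rmax_l|exact HcS]).
  assert (HC1 : C1 < cS) by (eapply Rle_lt_trans; [|exact HcS]; eapply Rle_trans; [|apply Rmax_r]; apply Rmax_l).
  assert (HC2 : C2 < cS) by (eapply Rle_lt_trans; [|exact HcS]; eapply Rle_trans; [|apply Rmax_r];
     eapply Rle_trans; [|apply Rmax_r]; apply Rmax_l).
  assert (HC3 : C3 < cS) by (eapply Rle_lt_trans; [|exact HcS]; eapply Rle_trans; [|apply Rmax_r];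
     eapply Rle_trans; [|apply Rmax_r]; apply Rmax_r).
  set (A := cS / (INR Lb * q1')).
  assert (HA : 0 < A) by (unfold A; apply Rdiv_lt_0_compat; nra).
  destruct (archimed A) as [Hu1 Hu2].
  assert (Hup : (0 < up A)%Z) by (apply lt_IZR; simpl; lra).
  set (h := Z.to_nat (up A)).
  assert (HhR : INR h = IZR (up A)).
  { unfold h. rewrite INR_IZR_INZ, Z2Nat.id; auto. lia. }
  assert (Hh1 : (1 <= h)%nat) by (unfold h; lia).
  set (n := (Lb * h)%nat).
  assert (HnR : INR n = INR Lb * INR h) by (unfold n; apply mult_INR).
  assert (HLA : INR Lb * A = cS / q1') by (unfold A; field; lra).
  assert (Hn1 : cS / q1' <= INR n) by (rewrite HnR, <- HLA; apply Rmult_le_compat_l; lra).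
  assert (Hn2 : INR n <= cS / q1' + INR Lb) by (rewrite HnR, <- HLA; nra).
  assert (Hnq : cS <= INR n * q1').
  { replace cS with (cS / q1' * q1') by (field; lra). apply Rmult_le_compat_r; lra. }
  assert (HnR0 : 0 < INR n) by (apply Rlt_le_trans with (cS / q1'); auto; apply Rdiv_lt_0_compat; lra).
  assert (HBD : INR ((Lb + 1) * h) <= (1 + rho) * cS / qlow).
  { rewrite mult_INR, plus_INR. simpl INR at 2.
    set (u := 1 / INR Lb).
    assert (Hu0 : 0 < u) by (unfold u; apply Rdiv_lt_0_compat; lra).
    assert (E : (INR Lb + 1) * A = (1 + u) * (1 + th) * (cS / q1)).
    { unfold A, u, q1'. field. repeat split; lra. }
    assert (Hux2 : u <= x) by exact Hux. assert (u * th <= x * x) by (apply Rmult_le_compat; lra).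
    assert (Hf : (1 + u) * (1 + th) <= 1 + 3 * rho / 4) by nra.
    assert (Hcq : cS / q1 <= cS / qlow).
    { apply div_le_l; [lra|]. unfold Rdiv. rewrite Rmult_assoc.
      replace cS with (cS * 1) at 1 by ring. apply Rmult_le_compat_l; [lra|].
      rewrite <- (Rinv_l qlow) by lra. apply Rmult_le_compat_l; auto. left; apply Rinv_0_lt_compat; lra. }
    assert (Hcq0 : 0 <= cS / q1) by (apply Rlt_le, Rdiv_lt_0_compat; lra).
    assert (HL1 : INR Lb + 1 <= rho / 4 * (cS / qlow)).
    { unfold C1 in HC1. apply lt_of_div in HC1; [|lra].
      replace (rho / 4 * (cS / qlow)) with (cS * rho / (4 * qlow)) by (field; lra).
      apply div_le_r; [lra|]. lra. }
    assert (Hb : (1 + rho) * cS / qlow = (1 + rho) * (cS / qlow)) by (field; lra).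
    rewrite Hb.
    apply Rle_trans with ((INR Lb + 1) * (A + 1)).
    apply Rmult_le_compat_l; lra.
    rewrite Rmult_plus_distr_l, Rmult_1_r, E.
    assert ((1 + u) * (1 + th) * (cS / q1) <= (1 + 3 * rho / 4) * (cS / qlow)).
    { apply Rle_trans with ((1 + 3 * rho / 4) * (cS / q1)). apply Rmult_le_compat_r; auto.
      apply Rmult_le_compat_l; lra. }
    lra. }
  assert (Hpp : INR (S Lb) * (INR m / (INR n * gam ^ 2)) <= 1 / 2).
  { rewrite S_INR. unfold C2 in HC2. apply lt_of_div in HC2; [|apply pow_lt; lra].
    assert (Hg2 : 0 < gam ^ 2) by (apply pow_lt; lra).
    assert (2 * (INR Lb + 1) * INR m * q1' <= INR n * gam ^ 2 * q1') by nra.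
    assert (2 * (INR Lb + 1) * INR m <= INR n * gam ^ 2).
    { apply Rmult_le_reg_r with q1'; auto. }
    replace ((INR Lb + 1) * (INR m / (INR n * gam ^ 2))) with ((INR Lb + 1) * INR m / (INR n * gam ^ 2)) by (field; split; lra).
    apply div_le_l; nra. }
  assert (HE := ET_bound m f0 q cS (cD cS) (fstar cS) sel ((1 + rho) * cS / qlow) HcS0
    (fun k Hk => HcD0 cS k HcS0 Hk) (fun k Hk => Hfstar cS k HcS0 Hk) Hsel n h Lb eq_refl HLb1 Hh1 HBD
    f1 Hpf1 L gam q1' HL Hgam Hcond Hnq N Hpp).
  eapply Rle_trans; [exact HE|].
  assert (Eq : INR n * (1 + 5 * (INR (S Lb) * (INR m / (INR n * gam ^ 2)))) =
               INR n + 5 * (INR Lb + 1) * INR m / gam ^ 2).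
  { rewrite S_INR. field. split; lra. }
  rewrite Eq.
  assert (Hq1' : cS / q1' = cS / q1 + cS * th / q1) by (unfold q1'; field; lra).
  assert (Hthq : cS * th / q1 <= cS * eps / 2).
  { apply div_le_l; [lra|]. nra. }
  unfold C3 in HC3. apply lt_of_div in HC3; [|lra].
  assert (cS * (/ q1 + eps) = cS / q1 + cS * eps) by (field; lra).
  fold q1. rewrite H. lra.
Qed.
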